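(* Let $H=(V,E)$ be an uncapacitated hypergraph, let $v_1,\ldots,v_n$ be an MA-ordering of $H$, fix a head ordering of the edges induced by it, let $k$ be a non-negative integer, and let $H_k$ be the hypergraph constructed from $H$ with respect to this ordering as described in the context. Then for every $A\subseteq V$, $|\delta_{H_k}(A)|\ge \min\{k,|\delta_H(A)|\}$.
   Context: A hypergraph $H=(V,E)$ has a finite vertex set $V$ and a finite multiset $E$ of edges, each a subset of $V$; uncapacitated means all edges have capacity $1$ (parallel edges allowed). For $S\subseteq V$, $\delta_H(S)$ is the set (multiset) of edges meeting both $S$ and $V\setminus S$. For subsets $A_1,\ldots,A_k\subseteq V$, $d(A_1,\ldots,A_k)$ is the number of edges that intersect every $A_i$; a single vertex $v$ stands for $\{v\}$. For an ordering $v_1,\ldots,v_n$ of $V$ let $V_i=\{v_1,\ldots,v_i\}$ ($V_0=\emptyset$). The ordering is an MA-ordering if $d(V_{i-1},v_i)\ge d(V_{i-1},v_j)$ for all $1\le i<j\le n$. The head $h(e)$ of an edge $e$ is the vertex of $e$ with smallest index. An ordering $e_1,\ldots,e_m$ of the edges is a head ordering if the index of $h(e_i)$ is non-decreasing in $i$. An edge $e$ is a backward edge of $v$ if $v\in e$ and $h(e)\ne v$. $D_k(v)$ denotes the first $k$ backward edges of $v$ in the head ordering (all of them if $v$ has fewer than $k$). For each $e\in E$ let $e'=\{v\in e : e\in D_k(v)\}\cup\{h(e)\}$, and let $H_k=(V,E_k)$ with $E_k$ the multiset $\{e' : e\in E,\ |e'|\ge 2\}$. *)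

(* Defs.v *)
From mathcomp Require Import all_boot.
Set Implicit Arguments. Unset Strict Implicit. Unset Printing Implicit Defensive.

Section Hyper.
Variable V : finType.

(* A hypergraph: the multiset of edges is a sequence E : seq {set V}.
   Edge "e_p" is the edge at position p; the order of the sequence is the
   chosen edge ordering (used for the head ordering). *)

Definition vidx (vs : seq V) (v : V) : nat := index v vs.

Definition Vpre (vs : seq V) (i : nat) : {set V} := [set x | vidx vs x < i].

Definition d2 (E : seq {set V}) (A B : {set V}) : nat :=
  count (fun e => (e :&: A != set0) && (e :&: B != set0)) E.

(* MA-ordering: d(V_{i-1}, v_i) >= d(V_{i-1}, v_j) for all 1 <= i < j <= n
   (0-based here: for i < j < n, d(V_i, vs_i) >= d(V_i, vs_j)). *)
Definition MA_ordering (E : seq {set V}) (vs : seq V) : Prop :=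
  forall i j, i < j -> j < size vs ->
    d2 E (Vpre vs i) [set x | vidx vs x == i] >=
    d2 E (Vpre vs i) [set x | vidx vs x == j].

Definition is_head (vs : seq V) (v : V) (e : {set V}) : bool :=
  (v \in e) && [forall u in e, vidx vs v <= vidx vs u].

Definition head_idx (vs : seq V) (e : {set V}) : nat :=
  \big[minn/size vs]_(u in e) vidx vs u.

(* head ordering: head indices non-decreasing along the edge sequence
   (empty edges have no head and are ignored) *)
Definition head_ordering (vs : seq V) (E : seq {set V}) : Prop :=
  sorted leq [seq head_idx vs e | e <- E & e != set0].

Definition backward (vs : seq V) (E : seq {set V}) (v : V) : seq nat :=
  [seq p <- iota 0 (size E) |
     (v \in nth set0 E p) && ~~ is_head vs v (nth set0 E p)].

Definition Dk (k : nat) (vs : seq V) (E : seq {set V}) (v : V) : seq nat :=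
  take k (backward vs E v).

Definition edge' (k : nat) (vs : seq V) (E : seq {set V}) (p : nat) : {set V} :=
  [set v in nth set0 E p | (p \in Dk k vs E v) || is_head vs v (nth set0 E p)].

Definition Hk (k : nat) (vs : seq V) (E : seq {set V}) : seq {set V} :=
  [seq edge' k vs E p | p <- iota 0 (size E) & 2 <= #|edge' k vs E p|].

Definition cut (E : seq {set V}) (S : {set V}) : nat :=
  count (fun e => (e :&: S != set0) && (e :\: S != set0)) E.

End Hyper.

(* Main.v *)
Require Import Defs.
From mathcomp Require Import all_boot zify.
Set Implicit Arguments. Unset Strict Implicit. Unset Printing Implicit Defensive.

Lemma bigmin_le (I : finType) (P : pred I) (F : I -> nat) x y :
  P y -> \big[minn/x]_(i | P i) F i <= F y.
Proof.
move=> Py; rewrite -big_filter.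
have : y \in [seq i <- index_enum I | P i] by rewrite mem_filter Py mem_index_enum.
elim: [seq _ <- _ | _] => [|z s IH] //.
rewrite inE big_cons => /orP[/eqP<- | /IH h]; first exact: geq_minl.
exact: leq_trans (geq_minr _ _) h.
Qed.

Lemma bigmin_att (I : finType) (P : pred I) (F : I -> nat) x :
  (\big[minn/x]_(i | P i) F i = x) \/ exists2 i, P i & \big[minn/x]_(i | P i) F i = F i.
Proof.
apply: (big_ind (fun m => m = x \/ exists2 i, P i & m = F i)); first by left.
- move=> a b Ha Hb; rewrite /minn; case: ltnP => _; by [].
- move=> i Pi; right; by exists i.
Qed.

Lemma count_ltS (T : Type) (f : T -> nat) (s : seq T) t :
  count (fun x => f x < t.+1) s = count (fun x => f x < t) s + count (fun x => f x == t) s.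
Proof.
elim: s => [|x s IH] //=; rewrite IH.
case: (ltngtP (f x) t) => h /=.
- by rewrite ltnS ltnW // ltn_eqF //= addn0.
- by rewrite ltnS leqNgt h /= !add0n.
- by rewrite h ltnSn /= add0n addnCA addnA.
Qed.

Lemma count_split (T : Type) (a b : pred T) (s : seq T) :
  subpred a b -> count a s + count (fun x => b x && ~~ a x) s = count b s.
Proof.
move=> ab; elim: s => [|x s IH] //=; rewrite -IH.
case ax: (a x); first by rewrite (ab _ ax) /=; lia.
by case: (b x) => /=; lia.
Qed.

Lemma count_sub_uniq (T : eqType) (P : pred T) (s t : seq T) :
  uniq s -> {subset s <= t} -> count P s <= count P t.
Proof.
move=> us st; rewrite -!size_filter; apply: uniq_leq_size; first exact: filter_uniq.
by move=> x; rewrite !mem_filter => /andP[-> /st].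
Qed.

Lemma take_count_ge (P : pred nat) (s : seq nat) k :
  (forall i j, i < j -> j < size s -> P (nth 0 s j) -> P (nth 0 s i)) ->
  minn k (count P s) <= count P (take k s).
Proof.
elim: s k => [|y s IH] k H /=; first by rewrite minn0.
case: k => [|k] /=; first by rewrite min0n.
case Py: (P y) => /=.
  rewrite !add1n minnSS ltnS; apply: IH => i j ij js; exact: (H i.+1 j.+1).
have -> : count P s = 0.
  apply/eqP; rewrite -leqn0 leqNgt -has_count; apply/negP => /hasP[z zs Pz].
  have := H 0 (index z s).+1 isT; rewrite /= ltnS index_mem zs nth_index // => /(_ isT Pz).
  by rewrite Py.
by rewrite minn0.
Qed.

Lemma take_count_le (T : Type) (P : pred T) (s : seq T) k :
  count P (take k s) <= count P s.
Proof. by rewrite -{2}(cat_take_drop k s) count_cat leq_addr. Qed.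

Lemma take_count_eq (T : eqType) (P : pred T) (s : seq T) k x :
  count P (take k s) = count P s -> x \in s -> P x -> x \in take k s.
Proof.
rewrite -{2}(cat_take_drop k s) count_cat -{1}[count P (take k s)]addn0 => /eqP.
rewrite eqn_add2l eq_sym -leqn0 leqNgt -has_count => /hasPn h.
rewrite -{1}(cat_take_drop k s) mem_cat => /orP[//|/h /negbTE ->] //.
Qed.

Lemma sorted_filter_nth (T : eqType) (f : T -> nat) (P : pred T) (s : seq T) x0 :
  sorted leq [seq f e | e <- s & P e] ->
  forall p q, p < q -> q < size s -> P (nth x0 s p) -> P (nth x0 s q) ->
  f (nth x0 s p) <= f (nth x0 s q).
Proof.
elim: s => [|x s IH] //= Hs [|p] [|q] //= pq qs Pp Pq.
  rewrite Pp /= in Hs.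
  have := order_path_min leq_trans Hs => /allP; apply.
  by apply: map_f; rewrite mem_filter Pq mem_nth.
apply: (IH _ p q) => //; case: (P x) Hs => //= Hs; exact: path_sorted Hs.
Qed.

Lemma count_sub_in (T : eqType) (a b : pred T) (s : seq T) :
  (forall x, x \in s -> a x -> b x) -> count a s <= count b s.
Proof.
elim: s => [|x s IH] //= H.
apply: leq_add; last by apply: IH => y ys; apply: H; rewrite inE ys orbT.
by case ax: (a x) => //=; rewrite (H x (mem_head _ _) ax).
Qed.
Section Main.
Variables (V : finType) (E : seq {set V}) (vs : seq V) (k : nat) (A : {set V}).
Hypotheses (Hu : uniq vs) (Hall : forall v : V, v \in vs).
Hypotheses (HMA : MA_ordering E vs) (HO : head_ordering vs E).

Local Notation n := (size vs).
Local Notation vi := (vidx vs).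
Local Notation hd := (head_idx vs).
Local Notation N := (size E).
Local Notation ed p := (nth set0 E p).
Local Notation ep p := (edge' k vs E p).

Definition crosses (S : {set V}) := (S :&: A != set0) && (S :\: A != set0).
Definition cp (X : {set V}) := count (fun p => crosses (ep p :&: X)) (iota 0 N).
Definition aa w t := count (fun p => hd (ed p) < t) (Dk k vs E w).
Definition bb w t := count (fun p => hd (ed p) < t) (backward vs E w).

Lemma vi_lt (v : V) : vi v < n.
Proof. by rewrite /vidx index_mem. Qed.

Lemma vi_inj (x y : V) : vi x = vi y -> x = y.
Proof.
move=> h; rewrite -(nth_index x (Hall x)) -(nth_index x (Hall y)).
by rewrite /vidx in h; rewrite h.
Qed.

Lemma vi_nth x0 i : i < n -> vi (nth x0 vs i) = i.
Proof. by move=> h; rewrite /vidx index_uniq. Qed.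

Lemma in_Vpre (x : V) i : (x \in Vpre vs i) = (vi x < i).
Proof. by rewrite /Vpre inE. Qed.

Lemma hd_le (e : {set V}) y : y \in e -> hd e <= vi y.
Proof. move=> ye; exact: (bigmin_le (fun u => vi u) n ye). Qed.

Lemma hd_att (e : {set V}) : e != set0 -> exists2 u, u \in e & hd e = vi u.
Proof.
case/set0Pn=> y ye.
case: (bigmin_att (mem e) (fun u => vi u) n) => [h|[u ue h]]; last by exists u.
have := hd_le ye; rewrite /head_idx h => h2.
by have := vi_lt y; rewrite ltnNge h2.
Qed.

Lemma hd_set0 : hd set0 = n.
Proof. by rewrite /head_idx big_pred0 // => x; rewrite inE. Qed.

Lemma hd_lt (e : {set V}) i : i <= n -> (e :&: Vpre vs i != set0) = (hd e < i).
Proof.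
move=> iN; apply/idP/idP.
  by case/set0Pn=> x; rewrite inE in_Vpre => /andP[xe xi]; exact: leq_ltn_trans (hd_le xe) xi.
move=> hi; have en : e != set0.
  by apply/negP => /eqP ee; move: hi; rewrite ee hd_set0 ltnNge iN.
case: (hd_att en) => u ue hu; apply/set0Pn; exists u.
by rewrite inE ue in_Vpre -hu.
Qed.

Lemma is_head_E v (e : {set V}) : is_head vs v e = (v \in e) && (vi v == hd e).
Proof.
rewrite /is_head; case ve: (v \in e) => //=.
apply/forall_inP/eqP.
  move=> h; have en : e != set0 by apply/set0Pn; exists v.
  case: (hd_att en) => u ue hu; apply/eqP; rewrite eqn_leq hd_le // andbT hu.
  exact: h.
by move=> h u ue; rewrite h hd_le.
Qed.

Lemma crossesP (S : {set V}) x y : x \in S -> y \in S -> (x \in A) != (y \in A) -> crosses S.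
Proof.
move=> xS yS; rewrite /crosses.
case xA: (x \in A); case yA: (y \in A) => //= _.
  by apply/andP; split; apply/set0Pn; [exists x | exists y]; rewrite !inE ?xS ?yS ?xA ?yA.
by apply/andP; split; apply/set0Pn; [exists y | exists x]; rewrite !inE ?xS ?yS ?xA ?yA.
Qed.

Lemma crosses_sub (S T : {set V}) : S \subset T -> crosses S -> crosses T.
Proof.
move=> ST /andP[/set0Pn[x] /setIP[xS xA] /set0Pn[y] /setDP[yS yA]].
apply: (crossesP (subsetP ST x xS) (subsetP ST y yS)); by rewrite xA (negbTE yA).
Qed.

Lemma crosses_single (S : {set V}) x : S \subset [set x] -> ~~ crosses S.
Proof.
move=> Sx; apply/negP => /andP[/set0Pn[y] /setIP[yS yA] /set0Pn[z] /setDP[zS zA]].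
move: (subsetP Sx y yS) (subsetP Sx z zS); rewrite !inE => /eqP ey /eqP ez.
by move: zA; rewrite ez -ey yA.
Qed.

Lemma crosses_card (S : {set V}) : crosses S -> 1 < #|S|.
Proof.
move=> /andP[/set0Pn[y] /setIP[yS yA] /set0Pn[z] /setDP[zS zA]].
have yz : y != z by apply/eqP => e; move: zA; rewrite -e yA.
have sub : [set y; z] \subset S.
  by apply/subsetP => x; rewrite !inE => /orP[/eqP-> | /eqP->].
by have := subset_leq_card sub; rewrite cards2 yz.
Qed.

Lemma in_ep (v : V) p : (v \in ep p) = (v \in ed p) && ((p \in Dk k vs E v) || is_head vs v (ed p)).
Proof. by rewrite /edge' inE. Qed.

Lemma in_backward (v : V) p : (p \in backward vs E v) = (p < N) && ((v \in ed p) && ~~ is_head vs v (ed p)).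
Proof. by rewrite /backward mem_filter mem_iota add0n andbC. Qed.

Lemma Dk_uniq (w : V) : uniq (Dk k vs E w).
Proof. by rewrite /Dk take_uniq // filter_uniq // iota_uniq. Qed.

Lemma Dk_back (w : V) p : p \in Dk k vs E w -> p \in backward vs E w.
Proof. exact: mem_take. Qed.


Lemma aa_le_k w t : aa w t <= k.
Proof. by apply: leq_trans (count_size _ _) _; rewrite /Dk size_take_min geq_minl. Qed.

Lemma aa_le_bb w t : aa w t <= bb w t.
Proof. exact: take_count_le. Qed.

Lemma bb_prefix w t (s := backward vs E w) :
  forall i j, i < j -> j < size s ->
    (fun p => hd (ed p) < t) (nth 0 s j) -> (fun p => hd (ed p) < t) (nth 0 s i).
Proof.
move=> i j ij js /= Pj.
have si : sorted ltn s by apply: sorted_filter; [exact: ltn_trans | exact: iota_ltn_sorted].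
have is' : i < size s := ltn_trans ij js.
have := sorted_ltn_nth ltn_trans 0 si; move=> /(_ i j); rewrite !inE => /(_ is' js ij) lt.
have := mem_nth 0 is'; have := mem_nth 0 js.
rewrite !in_backward => /and3P[qN wq _] /and3P[_ wp _].
apply: leq_ltn_trans Pj.
apply: (sorted_filter_nth (P := fun e => e != set0) HO) => //.
- by apply/set0Pn; exists w.
- by apply/set0Pn; exists w.
Qed.

Lemma aa_ge w t : minn k (bb w t) <= aa w t.
Proof. rewrite /aa /bb /Dk; apply: take_count_ge; exact: bb_prefix. Qed.

Lemma inter_single (e : {set V}) w : (e :&: [set x | vi x == vi w] != set0) = (w \in e).
Proof.
apply/set0Pn/idP => [[x /setIP[xe]]|we]; last by exists w; rewrite !inE we eqxx.
by rewrite inE => /eqP/vi_inj <-.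
Qed.

Lemma bb_d2 w i : i <= vi w -> bb w i = d2 E (Vpre vs i) [set x | vi x == vi w].
Proof.
move=> iw; rewrite /bb /backward count_filter /d2 -[in RHS](mkseq_nth set0 E) /mkseq count_map.
apply: eq_in_count => p _ /=.
rewrite hd_lt; last exact: leq_trans iw (ltnW (vi_lt w)).
rewrite inter_single.
case h: (hd (ed p) < i) => //=; case we: (w \in ed p) => //=.
by rewrite is_head_E we /= gtn_eqF // (leq_trans h iw).
Qed.

Lemma cp_mono (X Y : {set V}) : X \subset Y -> cp X <= cp Y.
Proof. by move=> XY; apply: sub_count => p; apply: crosses_sub; exact: setIS. Qed.

Lemma step (X Y : {set V}) w t : X \subset Y ->
  (forall p, p \in Dk k vs E w -> hd (ed p) = t -> crosses (ep p :&: Y) && ~~ crosses (ep p :&: X)) ->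
  cp X + count (fun p => hd (ed p) == t) (Dk k vs E w) <= cp Y.
Proof.
move=> XY H; rewrite /cp.
rewrite -(count_split (a := fun p => crosses (ep p :&: X)) (b := fun p => crosses (ep p :&: Y))); last first.
  by move=> p; apply: crosses_sub; exact: setIS.
rewrite leq_add2l.
apply: (@leq_trans (count (fun p => (p \in Dk k vs E w) && (hd (ed p) == t)) (iota 0 N))).
  have -> : count (fun p => hd (ed p) == t) (Dk k vs E w) =
            count (fun p => (p \in Dk k vs E w) && (hd (ed p) == t)) (Dk k vs E w).
    by apply: eq_in_count => p ->.
  apply: count_sub_uniq; first exact: Dk_uniq.
  by move=> p /Dk_back; rewrite in_backward mem_iota add0n => /andP[-> _].
by apply: sub_count => p /andP[pD /eqP ht]; exact: H.
Qed.

Lemma Vpre_S x0 j : j < n -> Vpre vs j :|: [set nth x0 vs j] = Vpre vs j.+1.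
Proof.
move=> jn; apply/setP => x; rewrite in_setU !in_Vpre in_set1 [in RHS]ltnS [in RHS]leq_eqVlt orbC.
congr (_ || _); apply/eqP/eqP => [->|h]; first exact: vi_nth.
by apply: vi_inj; rewrite h vi_nth.
Qed.

Lemma keyQ x0 j : 0 < j -> forall w, j <= vi w -> (nth x0 vs j.-1 \in A) != (w \in A) ->
  aa w j <= cp (Vpre vs j :|: [set w]).
Proof.
elim: j => [//|j IH] _ w jw opp.
have jn : j < n := ltn_trans jw (vi_lt w).
set u := nth x0 vs j; have uj : vi u = j := vi_nth x0 jn.
rewrite /= -/u in opp.
have we : forall p, p \in Dk k vs E w -> w \in ed p.
  by move=> p /Dk_back; rewrite in_backward => /and3P[].
have cr : forall p, p \in Dk k vs E w -> hd (ed p) = j ->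
    crosses (ep p :&: (Vpre vs j.+1 :|: [set w])).
  move=> p pD hp; apply: (crossesP (x := u) (y := w)) => //.
    have en : ed p != set0 by apply/set0Pn; exists w; exact: we.
    case: (hd_att en) => u' u'e hu'.
    have uu : u' = u by apply: vi_inj; rewrite uj -hu'.
    rewrite in_setI in_setU in_ep in_Vpre uj ltnSn -uu u'e /= is_head_E u'e /=.
    by rewrite hu' eqxx orbT.
  by rewrite in_setI in_setU in_ep in_set1 eqxx orbT we //= pD.
have ncr1 : forall p, hd (ed p) = j -> ~~ crosses (ep p :&: (Vpre vs j :|: [set w])).
  move=> p hp; apply: (crosses_single (x := w)); apply/subsetP => x.
  rewrite in_setI in_setU in_ep in_Vpre in_set1 => /andP[/andP[xe _] /orP[xj|//]].
  by have := hd_le xe; rewrite hp leqNgt xj.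
have ncr2 : forall p, hd (ed p) = j -> ~~ crosses (ep p :&: Vpre vs j.+1).
  move=> p hp; apply: (crosses_single (x := u)); apply/subsetP => x.
  rewrite in_setI in_ep in_Vpre in_set1 => /andP[/andP[xe _] xj].
  have := hd_le xe; rewrite hp => jx.
  by apply/eqP; apply: vi_inj; rewrite uj; apply/eqP; rewrite eqn_leq jx -ltnS xj.
suff [X [XY [HX HnX]]] : exists X : {set V}, X \subset Vpre vs j.+1 :|: [set w] /\
    aa w j <= cp X /\ (forall p, hd (ed p) = j -> ~~ crosses (ep p :&: X)).
  rewrite /aa count_ltS; apply: leq_trans (step (w := w) (t := j) XY _).
    by rewrite leq_add2r.
  by move=> p pD hp; rewrite cr // HnX.
have [j0|jpos] := posnP j.
  exists (Vpre vs j :|: [set w]); split.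
    by apply: setSU; apply/subsetP => x; rewrite !in_Vpre => h; exact: ltnW.
  split; last exact: ncr1.
  by rewrite /aa j0 (@eq_count _ _ pred0) ?count_pred0 // => p; rewrite ltn0.
case opp2: ((nth x0 vs j.-1 \in A) != (w \in A)).
  exists (Vpre vs j :|: [set w]); split.
    by apply: setSU; apply/subsetP => x; rewrite !in_Vpre => h; exact: ltnW.
  split; last exact: ncr1.
  exact: IH jpos w (ltnW jw) opp2.
exists (Vpre vs j.+1); split; first exact: subsetUl.
split; last exact: ncr2.
have ju : j <= vi u by rewrite uj.
have oppu : (nth x0 vs j.-1 \in A) != (u \in A).
  by move/negbFE/eqP: opp2 => ->; rewrite eq_sym.
have := IH jpos u ju oppu; rewrite -/u.
rewrite /u Vpre_S // -/u => hu.
apply: leq_trans hu.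
apply: leq_trans (aa_ge u j).
apply: (@leq_trans (minn k (bb w j))).
  by rewrite leq_min aa_le_k aa_le_bb.
rewrite leq_min geq_minl /=; apply: leq_trans (geq_minr _ _) _.
rewrite !bb_d2 ?uj ?(ltnW jw) //.
exact: (HMA jw (vi_lt w)).
Qed.

Lemma main_sec : minn k (cut E A) <= cut (Hk k vs E) A.
Proof.
have cutH : cp setT <= cut (Hk k vs E) A.
  rewrite /cut /Hk count_map count_filter /cp; apply: sub_count => p /= c.
  rewrite setIT in c; apply/andP; split; first exact: c.
  exact: crosses_card c.
have cutE : cut E A = count (fun p => crosses (ed p)) (iota 0 N).
  by rewrite /cut -[in LHS](mkseq_nth set0 E) /mkseq count_map.
case: (boolP (has (fun p => crosses (ed p) && ~~ crosses (ep p)) (iota 0 N))).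
  case/hasP=> p pN /andP[cp1 ncp].
  move: (cp1) => /andP[/set0Pn[x /setIP[xe xA]] /set0Pn[y /setDP[ye yA]]].
  have en : ed p != set0 by apply/set0Pn; exists x.
  case: (hd_att en) => u0 u0e hu0.
  have u0ep : u0 \in ep p.
    by rewrite in_ep u0e is_head_E u0e hu0 eqxx orbT.
  pose w := if u0 \in A then y else x.
  have we : w \in ed p by rewrite /w; case: (u0 \in A).
  have opp : (u0 \in A) != (w \in A).
    by rewrite /w; case u0A: (u0 \in A); rewrite ?xA ?(negbTE yA).
  have wnep : w \notin ep p.
    by apply/negP => wep; move: ncp; rewrite (crossesP wep u0ep) // eq_sym.
  move: wnep; rewrite in_ep we /= negb_or => /andP[pnD nhead].
  have hw : hd (ed p) < vi w.
    rewrite ltn_neqAle (hd_le we) andbT eq_sym.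
    by move: nhead; rewrite is_head_E we.
  have pB : p \in backward vs E w.
    by move: pN; rewrite in_backward we nhead mem_iota add0n !andbT.
  set a := hd (ed p) in hw hu0.
  have kaa : k <= aa w a.+1.
    have := aa_ge w a.+1.
    case: (leqP k (bb w a.+1)) => kb; first by [].
    move=> ge.
    have eq : aa w a.+1 = bb w a.+1.
      by apply/eqP; rewrite eqn_leq aa_le_bb ge.
    have := @take_count_eq _ (fun q => hd (ed q) < a.+1)
      (backward vs E w) k p eq pB (ltnSn a).
    by move=> h; move/negP: pnD; case.
  have := keyQ (x0 := u0) (j := a.+1) isT hw.
  have nu : nth u0 vs a = u0 by rewrite hu0 /vidx nth_index.
  rewrite /= nu => /(_ opp) h.
  apply: leq_trans (geq_minl _ _) _.
  apply: leq_trans kaa _; apply: leq_trans h _.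
  apply: leq_trans cutH; apply: cp_mono; exact: subsetT.
move/hasPn => H.
rewrite cutE; apply: leq_trans (geq_minr _ _) _; apply: leq_trans cutH.
rewrite /cp; apply: count_sub_in => p pN c.
by have := H p pN; rewrite c /= negbK setIT.
Qed.

End Main.

Theorem mainTheorem2 (V : finType) (E : seq {set V}) (vs : seq V) (k : nat) :
  uniq vs -> (forall v : V, v \in vs) ->
  MA_ordering E vs ->
  head_ordering vs E ->
  forall A : {set V}, minn k (cut E A) <= cut (Hk k vs E) A.
Proof.
move=> Hu Hall HMA HO A; exact: main_sec.
Qed.
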